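(* Let $A=(a_{ij})_{1\le i,j\le n}$ be a complex Nekrasov matrix, and let $k\in\{1,\dots,n\}$ be the smallest index such that $a_{kj}=0$ for all $j>k$. Then there exist real numbers $\epsilon_1,\dots,\epsilon_n$ satisfying $$\epsilon_i=0 \text{ for } i=1,\dots,k-1,\qquad 0<\epsilon_i<|a_{ii}|-h_i(A)\ \text{ and }\ \epsilon_i>\sum_{j=k}^{i-1}\frac{|a_{ij}|\,\epsilon_j}{|a_{jj}|}\ \text{ for } i=k,\dots,n$$ (the sum being empty for $i=k$), and for any such numbers the diagonal matrix $S=\mathrm{diag}(s_1,\dots,s_n)$ with $s_i:=\frac{h_i(A)+\epsilon_i}{|a_{ii}|}$ has positive diagonal entries and $AS$ is strictly diagonally dominant by rows.
   Context: For a complex $n\times n$ matrix $A=(a_{ij})$ with $a_{ii}\ne 0$ for all $i$, define recursively $h_1(A):=\sum_{j\ne 1}|a_{1j}|$ and $h_i(A):=\sum_{j=1}^{i-1}|a_{ij}|\frac{h_j(A)}{|a_{jj}|}+\sum_{j=i+1}^{n}|a_{ij}|$ for $i=2,\dots,n$. $A$ is a Nekrasov matrix if $|a_{ii}|>h_i(A)$ for all $i\in\{1,\dots,n\}$. A matrix $B=(b_{ij})$ is strictly diagonally dominant by rows (SDD) if $|b_{ii}|>\sum_{j\ne i}|b_{ij}|$ for all $i$. *)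

(* Defs.v *)
From HB Require Import structures.
From mathcomp Require Import all_boot all_order all_algebra.
From mathcomp Require Import complex.
Set Implicit Arguments. Unset Strict Implicit. Unset Printing Implicit Defensive.
Import Order.TTheory GRing.Theory Num.Theory.
Local Open Scope ring_scope.

(* Complex numbers: R[i] over a real closed field R (R = the reals gives C).
   Modulus |z| : R is Normc.normc z. Indices 'I_n are 0-based (i ~ i+1). *)
Definition cabs (R : rcfType) (z : R[i]) : R := Normc.normc z.

(* h_i(A) via fuel m; correct as soon as m > i; we use fuel n. *)
Fixpoint nek_hN (R : rcfType) (n : nat) (A : 'M[R[i]]_n) (m : nat) (i : 'I_n) : R :=
  match m with
  | 0 => 0
  | m'.+1 =>
      \sum_(j < n | (j < i)%N) cabs (A i j) * nek_hN A m' j / cabs (A j j)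
      + \sum_(j < n | (i < j)%N) cabs (A i j)
  end.

Definition nek_h (R : rcfType) (n : nat) (A : 'M[R[i]]_n) (i : 'I_n) : R :=
  nek_hN A n i.

Definition nekrasov (R : rcfType) (n : nat) (A : 'M[R[i]]_n) : Prop :=
  forall i : 'I_n, A i i != 0 /\ nek_h A i < cabs (A i i).

Definition SDD (R : rcfType) (n : nat) (B : 'M[R[i]]_n) : Prop :=
  forall i : 'I_n, \sum_(j < n | j != i) cabs (B i j) < cabs (B i i).

Definition nek_eps_ok (R : rcfType) (n : nat) (A : 'M[R[i]]_n) (k : 'I_n)
    (eps : 'I_n -> R) : Prop :=
  forall i : 'I_n,
    ((i < k)%N -> eps i = 0) /\
    ((k <= i)%N ->
       [/\ 0 < eps i, eps i < cabs (A i i) - nek_h A i &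
           \sum_(j < n | (k <= j < i)%N) cabs (A i j) * eps j / cabs (A j j) < eps i]).

Definition nek_s (R : rcfType) (n : nat) (A : 'M[R[i]]_n) (eps : 'I_n -> R)
    (i : 'I_n) : R :=
  (nek_h A i + eps i) / cabs (A i i).

(* Main.v *)
Require Import Defs.
From HB Require Import structures.
From mathcomp Require Import all_boot all_order all_algebra.
From mathcomp Require Import complex.
From mathcomp Require Import zify ring lra.
Import Order.TTheory GRing.Theory Num.Theory.
Local Open Scope ring_scope.
Set Implicit Arguments. Unset Strict Implicit.

Section Aux.
Variable R : rcfType.

Lemma cabs_ge0 (z : R[i]) : 0 <= cabs z.
Proof. by case: z => a b; rewrite /cabs /=; apply: sqrtr_ge0. Qed.

Lemma cabs_gt0 (z : R[i]) : z != 0 -> 0 < cabs z.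
Proof.
move=> z0; rewrite lt_def cabs_ge0 andbT; apply/eqP => /Normc.eq0_normc.
by move/eqP: z0.
Qed.

Lemma cabsM (x y : R[i]) : cabs (x * y) = cabs x * cabs y.
Proof. exact: Normc.normcM. Qed.

Lemma cabs_real (x : R) : 0 <= x -> cabs (x%:C)%C = x.
Proof.
move=> x0; rewrite /cabs /= expr0n /= addr0 sqrtr_sqr ger0_norm //.
Qed.

Lemma sum_lt (n : nat) (P : pred 'I_n) (F G : 'I_n -> R) :
  (forall j, P j -> F j <= G j) -> (exists j, P j /\ F j < G j) ->
  \sum_(j < n | P j) F j < \sum_(j < n | P j) G j.
Proof.
move=> le [l [Pl lt]].
rewrite (bigD1 l) //= [X in _ < X](bigD1 l) //=.
apply: ltr_leD => //; apply: ler_sum => j /andP[Pj _]; exact: le.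
Qed.

End Aux.

Section Main.
Variables (R : rcfType) (n : nat) (A : 'M[R[i]]_n).

Lemma hN_stable m1 m2 (j : 'I_n) :
  (j < m1)%N -> (j < m2)%N -> nek_hN A m1 j = nek_hN A m2 j.
Proof.
elim: m1 m2 j => [|m1 IH] [|m2] j //= h1 h2.
congr (_ + _); apply: eq_bigr => l lj; rewrite (IH m2) //; lia.
Qed.

Lemma h_eq (i : 'I_n) : nek_h A i =
  \sum_(j < n | (j < i)%N) cabs (A i j) * nek_h A j / cabs (A j j)
  + \sum_(j < n | (i < j)%N) cabs (A i j).
Proof.
have n0 : (0 < n)%N by move: (ltn_ord i); lia.
rewrite /nek_h; transitivity (nek_hN A n.-1.+1 i); first by rewrite prednK.
rewrite /=; congr (_ + _); apply: eq_bigr => l lj; rewrite (hN_stable (m2 := n)) //.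
move: (ltn_ord i) (ltn_ord l) => ? ?; lia.
Qed.

Lemma hN_ge0 m (i : 'I_n) : 0 <= nek_hN A m i.
Proof.
elim: m i => [|m IH] i //=.
apply: addr_ge0; apply: sumr_ge0 => j _.
  by apply: mulr_ge0; [apply: mulr_ge0; [apply: cabs_ge0|apply: IH]|
    rewrite invr_ge0 cabs_ge0].
exact: cabs_ge0.
Qed.

Lemma h_ge0 i : 0 <= nek_h A i.
Proof. exact: hN_ge0. Qed.

Variable k : 'I_n.

Fixpoint tN (m : nat) (i : 'I_n) : R :=
  match m with
  | 0 => 0
  | m'.+1 => \sum_(j < n | (k <= j < i)%N) cabs (A i j) * tN m' j / cabs (A j j) + 1
  end.

Lemma tN_stable m1 m2 (j : 'I_n) :
  (j < m1)%N -> (j < m2)%N -> tN m1 j = tN m2 j.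
Proof.
elim: m1 m2 j => [|m1 IH] [|m2] j //= h1 h2.
congr (_ + _); apply: eq_bigr => l /andP[_ lj]; rewrite (IH m2) //; lia.
Qed.

Definition t i := tN n i.

Lemma t_eq (i : 'I_n) : t i =
  \sum_(j < n | (k <= j < i)%N) cabs (A i j) * t j / cabs (A j j) + 1.
Proof.
have n0 : (0 < n)%N by move: (ltn_ord i); lia.
rewrite /t; transitivity (tN n.-1.+1 i); first by rewrite prednK.
rewrite /=; congr (_ + _); apply: eq_bigr => l /andP[_ lj].
rewrite (tN_stable (m2 := n)) //.
move: (ltn_ord i) (ltn_ord l) => ? ?; lia.
Qed.

Lemma tN_ge0 m i : 0 <= tN m i.
Proof.
elim: m i => [|m IH] i //=.
apply: addr_ge0 => //; apply: sumr_ge0 => j _.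
by apply: mulr_ge0; [apply: mulr_ge0; [apply: cabs_ge0|apply: IH]|
    rewrite invr_ge0 cabs_ge0].
Qed.

Lemma t_gt0 i : 0 < t i.
Proof.
rewrite t_eq; apply: ltr_wpDl => //; apply: sumr_ge0 => j _.
by apply: mulr_ge0; [apply: mulr_ge0; [apply: cabs_ge0|apply: tN_ge0]|
    rewrite invr_ge0 cabs_ge0].
Qed.

End Main.

Theorem theorem2p2 (R : rcfType) (n : nat) (A : 'M[R[i]]_n) (k : 'I_n) :
  nekrasov A ->
  (forall j : 'I_n, (k < j)%N -> A k j = 0) ->
  (forall k' : 'I_n, (k' < k)%N -> exists j : 'I_n, (k' < j)%N /\ A k' j != 0) ->
  (exists eps : 'I_n -> R, nek_eps_ok A k eps) /\
  (forall eps : 'I_n -> R, nek_eps_ok A k eps ->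
     (forall i : 'I_n, 0 < nek_s A eps i) /\
     SDD (A *m diag_mx (\row_i ((nek_s A eps i)%:C)%C))).
Proof.
move=> nek hk hprev.
have d_gt0 : forall i, 0 < cabs (A i i) - nek_h A i.
  by move=> i; rewrite subr_gt0; case: (nek i).
have aii_gt0 : forall i, 0 < cabs (A i i).
  by move=> i; apply: cabs_gt0; case: (nek i).
split.
  set Sg := \sum_(i < n) t A k i / (cabs (A i i) - nek_h A i).
  have del_gt0 : 0 < (1 + Sg)^-1.
    rewrite invr_gt0 (lt_le_trans ltr01) // lerDl.
    apply: sumr_ge0 => i _; apply: divr_ge0; apply: ltW; [exact: t_gt0|exact: d_gt0].
  set del := (1 + Sg)^-1.
  exists (fun i : 'I_n => if (k <= i)%N then del * t A k i else 0).
  move=> i; split.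
    by move=> ik; rewrite leqNgt ik.
  move=> ki; rewrite ki; split.
  - by apply: mulr_gt0 => //; apply: t_gt0.
  - have h1 : t A k i / (cabs (A i i) - nek_h A i) <= Sg.
      rewrite /Sg (bigD1 i) //= lerDl; apply: sumr_ge0 => j _.
      by apply: divr_ge0; apply: ltW; [exact: t_gt0|exact: d_gt0].
    have h2 : t A k i / (cabs (A i i) - nek_h A i) < 1 + Sg by lra.
    rewrite ltr_pdivrMr ?d_gt0 // in h2.
    rewrite mulrC ltr_pdivrMr; last by rewrite (lt_le_trans ltr01) // lerDl (le_trans _ h1) //
      divr_ge0 // ltW // ?t_gt0 ?d_gt0.
    by rewrite mulrC.
  - rewrite (eq_bigr (fun j : 'I_n => del * (cabs (A i j) * t A k j / cabs (A j j)))); last first.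
      by move=> j /andP[kj _]; rewrite kj; ring.
    rewrite -mulr_sumr [X in _ < del * X]t_eq ltr_pM2l // ltrDl ltr01 //.
move=> eps ok.
have eps_ge0 : forall j, 0 <= eps j.
  move=> j; case: (leqP k j) => kj; first by case: (ok j) => _ /(_ kj) [/ltW].
  by case: (ok j) => /(_ kj) -> _.
have eps_lt : forall j, eps j < cabs (A j j) - nek_h A j.
  move=> j; case: (leqP k j) => kj; first by case: (ok j) => _ /(_ kj) [].
  by case: (ok j) => /(_ kj) -> _.
have hpos : forall j, 0 < nek_h A j + eps j.
  move=> j; have := h_ge0 A j; case: (leqP k j) => kj.
    by case: (ok j) => _ /(_ kj) [] *; lra.
  case: (ok j) => /(_ kj) -> _ _; rewrite addr0 h_eq.
  have [l [jl Al]] := hprev j kj.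
  have : \sum_(l0 < n | (j < l0)%N) (0:R) < \sum_(l0 < n | (j < l0)%N) cabs (A j l0).
    apply: sum_lt; first by move=> *; exact: cabs_ge0.
    by exists l; split => //; apply: cabs_gt0.
  rewrite big1 // => hs.
  have : 0 <= \sum_(j0 < n | (j0 < j)%N) cabs (A j j0) * nek_h A j0 / cabs (A j0 j0).
    apply: sumr_ge0 => j0 _; apply: mulr_ge0; last by rewrite invr_ge0 cabs_ge0.
    by apply: mulr_ge0; [apply: cabs_ge0|apply: h_ge0].
  lra.
have s_gt0 : forall i, 0 < nek_s A eps i.
  by move=> i; apply: divr_gt0.
have s_lt1 : forall j, nek_s A eps j < 1.
  by move=> j; rewrite /nek_s ltr_pdivrMr // mul1r; have := eps_lt j; lra.
split => // i.
rewrite mul_mx_diag.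
under eq_bigr => j _ do rewrite !mxE cabsM cabs_real ?(ltW (s_gt0 j)) //.
rewrite !mxE cabsM cabs_real ?(ltW (s_gt0 i)) // /nek_s mulrC divfK ?lt0r_neq0 //.
rewrite (bigID (fun j : 'I_n => (j < i)%N)) /=.
rewrite (eq_bigl (fun j : 'I_n => (j < i)%N)); last first.
  by move=> j; rewrite -val_eqE /=; case: ltngtP.
rewrite [X in _ + X < _](eq_bigl (fun j : 'I_n => (i < j)%N)); last first.
  by move=> j; rewrite -val_eqE /=; case: ltngtP.
under eq_bigr => j _ do rewrite mulrDl mulrDr !mulrA.
rewrite big_split /=.
rewrite [X in _ + X + _ < _](bigID (fun j : 'I_n => (k <= j)%N)) /=.
rewrite [X in _ + (_ + X) + _ < _]big1; last first.
  by move=> j /andP[_ kj]; case: (ok j) => /(_ _) -> //; [rewrite mulr0 mul0r | rewrite ltnNge].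
rewrite addr0.
rewrite [X in _ + X + _ < _](eq_bigl (fun j : 'I_n => (k <= j < i)%N)); last first.
  by move=> j; rewrite andbC.
have heq := h_eq A i.
set H1 := \sum_(j < n | (j < i)%N) _ in heq *.
set U := \sum_(j < n | (i < j)%N) cabs (A i j) in heq *.
set E := \sum_(j < n | (k <= j < i)%N) _.
set W := \sum_(j < n | (i < j)%N) _.
have WU : W <= U.
  apply: ler_sum => j _; rewrite -[X in _ <= X]mulr1.
  by apply: (ler_wpM2l (cabs_ge0 _)); apply: ltW; apply: s_lt1.
case: (leqP k i) => ki.
  case: (ok i) => _ /(_ ki) [_ _ hE].
  rewrite /E; lra.
have E0 : E = 0.
  by rewrite /E big1 // => j /andP[kj ji]; exfalso; lia.
have WU' : W < U.
  have [l [il Al]] := hprev i ki.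
  apply: sum_lt.
    move=> j _; rewrite -[X in _ <= X]mulr1.
    by apply: (ler_wpM2l (cabs_ge0 _)); apply: ltW; apply: s_lt1.
  by exists l; split => //; rewrite gtr_pMr ?cabs_gt0 //; apply: s_lt1.
case: (ok i) => /(_ ki) -> _.
lra.
Qed.
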